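(* Let $X$ be a well-ordered set and $DGDNP(X)$ the free differential GDN-Poisson algebra generated by $X$. Then the set of normal words forms a linear basis of $DGDNP(X)$. Moreover, $(DGDNP(X),\cdot,\circ)\cong(k\{X\},\cdot,\circ)$ as GDN-Poisson algebras, where $f\circ g=fDg$ in $k\{X\}$, and $(DGDNP(X),\cdot,\partial)\cong(k\{X\},\cdot,D)$ as commutative associative differential algebras, where $\partial(f)=e\circ f$ for $f\in DGDNP(X)$; in both cases the isomorphism is induced by $a\mapsto a$, $a\in X$.
   Context: A GDN-Poisson algebra is a vector space with bilinear products $\cdot,\circ$ such that $(\cdot)$ is commutative associative with unit $e$, $x\circ(y\circ z)-(x\circ y)\circ z=y\circ(x\circ z)-(y\circ x)\circ z$, $(x\circ y)\circ z=(x\circ z)\circ y$, $(x\cdot y)\circ z=x\cdot(y\circ z)$, $(x\circ y)\cdot z-x\circ(y\cdot z)=(y\circ x)\cdot z-y\circ(x\cdot z)$. It is a differential GDN-Poisson algebra if moreover $x\circ(y\cdot z)=(x\circ y)\cdot z+(x\circ z)\cdot y$ for all $x,y,z$. For $a\in X$ and $i\ge0$ let $[e\circ e\circ\cdots\circ a]_i=e\circ(e\circ(\cdots(e\circ a)\cdots))$ with $i$ copies of $e$. A normal word is $[e\circ\cdots\circ a_1]_{i_1}\cdot[e\circ\cdots\circ a_2]_{i_2}\cdots[e\circ\cdots\circ a_n]_{i_n}$ with $n\ge0$ (equal to $e$ if $n=0$), $a_t\in X$, and $(i_1,a_1)\ge\cdots\ge(i_n,a_n)$ lexicographically. $k\{X\}$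 is the free commutative associative differential algebra over the field $k$ generated by $X$, with unit $e$ and one derivation $D$ ($De=0$). *)

(* Defs.v *)
From HB Require Import structures.
From mathcomp Require Import all_boot all_order all_algebra.
Set Implicit Arguments.
Unset Strict Implicit.
Unset Printing Implicit Defensive.
Import Order.TTheory GRing.Theory.
Local Open Scope ring_scope.

Section Defs.
Variable k : fieldType.

Definition bilinear_op (V : lmodType k) (m : V -> V -> V) : Prop :=
  (forall (a : k) x y z, m (a *: x + y) z = a *: m x z + m y z) /\
  (forall (a : k) x y z, m x (a *: y + z) = a *: m x y + m x z).

Definition linear_map (V W : lmodType k) (f : V -> W) : Prop :=
  forall (a : k) x y, f (a *: x + y) = a *: f x + f y.

Definition is_GDNP (V : lmodType k) (dot circ : V -> V -> V) (e : V) : Prop :=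
  bilinear_op dot /\ bilinear_op circ /\
  (forall x y, dot x y = dot y x) /\
  (forall x y z, dot x (dot y z) = dot (dot x y) z) /\
  (forall x, dot e x = x /\ dot x e = x) /\
  (forall x y z, circ x (circ y z) - circ (circ x y) z
                 = circ y (circ x z) - circ (circ y x) z) /\
  (forall x y z, circ (circ x y) z = circ (circ x z) y) /\
  (forall x y z, circ (dot x y) z = dot x (circ y z)) /\
  (forall x y z, dot (circ x y) z - circ x (dot y z)
                 = dot (circ y x) z - circ y (dot x z)).

Definition is_DGDNP (V : lmodType k) (dot circ : V -> V -> V) (e : V) : Prop :=
  is_GDNP dot circ e /\
  (forall x y z, circ x (dot y z) = dot (circ x y) z + dot (circ x z) y).

Definition is_GDNP_hom (V W : lmodType k) (dotV circV : V -> V -> V) (eV : V)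
  (dotW circW : W -> W -> W) (eW : W) (f : V -> W) : Prop :=
  [/\ linear_map f, f eV = eW,
      (forall x y, f (dotV x y) = dotW (f x) (f y)) &
      (forall x y, f (circV x y) = circW (f x) (f y))].

Definition is_free_DGDNP (X : Type) (V : lmodType k) (dot circ : V -> V -> V)
  (e : V) (i : X -> V) : Prop :=
  is_DGDNP dot circ e /\
  forall (W : lmodType k) (dotW circW : W -> W -> W) (eW : W) (f : X -> W),
    is_DGDNP dotW circW eW ->
    exists phi : V -> W,
      (is_GDNP_hom dot circ e dotW circW eW phi /\ forall a, phi (i a) = f a) /\
      forall psi : V -> W,
        is_GDNP_hom dot circ e dotW circW eW psi -> (forall a, psi (i a) = f a) ->
        forall v, psi v = phi v.

Definition is_CDA (V : lmodType k) (dot : V -> V -> V) (e : V) (D : V -> V)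
  : Prop :=
  bilinear_op dot /\
  (forall x y, dot x y = dot y x) /\
  (forall x y z, dot x (dot y z) = dot (dot x y) z) /\
  (forall x, dot e x = x /\ dot x e = x) /\
  linear_map D /\
  (forall x y, D (dot x y) = dot (D x) y + dot x (D y)) /\
  D e = 0.

Definition is_CDA_hom (V W : lmodType k) (dotV : V -> V -> V) (eV : V)
  (DV : V -> V) (dotW : W -> W -> W) (eW : W) (DW : W -> W) (f : V -> W)
  : Prop :=
  [/\ linear_map f, f eV = eW,
      (forall x y, f (dotV x y) = dotW (f x) (f y)) &
      (forall x, f (DV x) = DW (f x))].

Definition is_free_CDA (X : Type) (V : lmodType k) (dot : V -> V -> V) (e : V)
  (D : V -> V) (i : X -> V) : Prop :=
  is_CDA dot e D /\
  forall (W : lmodType k) (dotW : W -> W -> W) (eW : W) (DW : W -> W)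
         (f : X -> W),
    is_CDA dotW eW DW ->
    exists phi : V -> W,
      (is_CDA_hom dot e D dotW eW DW phi /\ forall a, phi (i a) = f a) /\
      forall psi : V -> W,
        is_CDA_hom dot e D dotW eW DW psi -> (forall a, psi (i a) = f a) ->
        forall v, psi v = phi v.

Definition is_basis_on (I : eqType) (V : lmodType k) (P : pred I) (w : I -> V)
  : Prop :=
  (forall v : V, exists (S : seq I) (c : I -> k),
      all P S /\ v = \sum_(s <- S) c s *: w s) /\
  (forall (S : seq I) (c : I -> k), uniq S -> all P S ->
      \sum_(s <- S) c s *: w s = 0 -> forall s, s \in S -> c s = 0).

End Defs.

Section NormalWords.
Variables (d : Order.disp_t) (X : orderType d).

Definition lexge (p q : nat * X) : bool :=
  (q.1 < p.1)%N || ((p.1 == q.1) && (q.2 <= p.2)%O).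

(* index sequences of normal words: (i1,a1) >= ... >= (in,an) *)
Definition normal_index (s : seq (nat * X)) : bool := sorted lexge s.

Variables (k : fieldType) (V : lmodType k) (dot circ : V -> V -> V) (e : V)
  (i : X -> V).

Definition ebracket (p : nat * X) : V := iter p.1 (circ e) (i p.2).

Fixpoint normal_word (s : seq (nat * X)) : V :=
  match s with
  | [::] => e
  | [:: p] => ebracket p
  | p :: s' => dot (ebracket p) (normal_word s')
  end.

End NormalWords.

(* Main.v *)
Require Import Defs.
From HB Require Import structures.
From mathcomp Require Import all_boot all_order all_algebra.
From mathcomp Require Import mpoly.
From Stdlib Require Import Lia ClassicalEpsilon.
From mathcomp Require Import zify.
Set Implicit Arguments. Unset Strict Implicit. Unset Printing Implicit Defensive.
Import Order.TTheory GRing.Theory.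
Local Open Scope ring_scope.

Lemma self0 (k : fieldType) (V : lmodType k) (t : V) : t = t + t -> t = 0.
Proof. by move/(congr1 (fun u => u - t)); rewrite addrK subrr. Qed.

Lemma addKl (k : fieldType) (V : lmodType k) (a b : V) : a + b - a = b.
Proof. by rewrite addrAC subrr add0r. Qed.

Section Bil.
Variables (k : fieldType) (V : lmodType k) (m : V -> V -> V).
Hypothesis Hm : bilinear_op m.
Lemma bDl x y z : m (x + y) z = m x z + m y z.
Proof. by have := (Hm.1 1 x y z); rewrite !scale1r. Qed.
Lemma bDr x y z : m x (y + z) = m x y + m x z.
Proof. by have := (Hm.2 1 x y z); rewrite !scale1r. Qed.
Lemma bZl a x z : m (a *: x) z = a *: m x z.
Proof. have := (Hm.1 a x 0 z); rewrite addr0 => ->.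
have := (Hm.1 1 0 0 z); rewrite scaler0 addr0 scale1r.
by move/self0 ->; rewrite addr0. Qed.
Lemma bZr a x z : m x (a *: z) = a *: m x z.
Proof. have := (Hm.2 a x z 0); rewrite addr0 => ->.
have := (Hm.2 1 x 0 0); rewrite scaler0 addr0 scale1r.
by move/self0 ->; rewrite addr0. Qed.
Lemma b0l z : m 0 z = 0.
Proof. by have := bZl 0 0 z; rewrite !scale0r. Qed.
Lemma b0r z : m z 0 = 0.
Proof. by have := bZr 0 z 0; rewrite !scale0r. Qed.
Lemma bNl x z : m (- x) z = - m x z.
Proof. by rewrite -scaleN1r bZl scaleN1r. Qed.
Lemma bNr x z : m z (- x) = - m z x.
Proof. by rewrite -scaleN1r bZr scaleN1r. Qed.
Lemma bBl x y z : m (x - y) z = m x z - m y z.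
Proof. by rewrite bDl bNl. Qed.
Lemma bBr x y z : m z (x - y) = m z x - m z y.
Proof. by rewrite bDr bNr. Qed.
End Bil.

Section CDAtoDGDNP.
Variables (k : fieldType) (V : lmodType k) (dot : V -> V -> V) (e : V) (D : V -> V).
Hypothesis H : is_CDA dot e D.

Lemma CDA_DGDNP : is_DGDNP dot (fun f g => dot f (D g)) e.
Proof.
case: H => [bil [cm [mA [un [lD [Dm De]]]]]].
have DD x y : D (x + y) = D x + D y by have := lD 1 x y; rewrite !scale1r.
have DZ a x : D (a *: x) = a *: D x.
  have := lD a x 0; rewrite addr0 => ->.
  have := lD 1 0 0; rewrite scaler0 addr0 scale1r.
  by move/self0 ->; rewrite addr0.
have sw x y z : dot x (dot y z) = dot y (dot x z).
  by rewrite mA (cm x y) -mA.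
split; last first.
  by move=> x y z; rewrite Dm bDr //; congr (_ + _); [exact: mA | rewrite -mA (cm (D z) y)].
split; first by [].
split.
  split=> a x y z; first by rewrite (bil.1).
  by rewrite lD bDr // bZr.
split; first by [].
split; first by [].
split; first by [].
split.
  move=> x y z; rewrite Dm bDr // mA (addKl (dot (dot x (D y)) (D z))).
  rewrite Dm bDr // [in RHS]mA addKl; exact: sw.
split.
  by move=> x y z; rewrite -!mA (cm (D y)).
split.
  by move=> x y z; rewrite mA.
move=> x y z; rewrite !Dm !bDr // !opprD !addrA.
by rewrite -(mA x (D y)) -(mA y (D x)) !subrr !add0r sw.
Qed.
End CDAtoDGDNP.

Section DGDNPtoCDA.
Variables (k : fieldType) (V : lmodType k) (dot circ : V -> V -> V) (e : V).
Hypothesis H : is_DGDNP dot circ e.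

Lemma DGDNP_circ x y : circ x y = dot x (circ e y).
Proof.
case: H => [[bd [bc [cm [mA [un [_ [_ [pm _]]]]]]]] _].
by rewrite -pm (un x).2.
Qed.

Lemma DGDNP_CDA : is_CDA dot e (circ e).
Proof.
case: H => [[bd [bc [cm [mA [un [_ [_ [pm _]]]]]]]] df].
do 4 (split; first by []).
split; first by move=> a x y; rewrite bc.2.
split; first by move=> x y; rewrite df (cm (circ e y)).
have := df e e e; rewrite (un e).1 (un (circ e e)).2; exact: self0.
Qed.
End DGDNPtoCDA.

Lemma lin_comp (k : fieldType) (U V W : lmodType k) (f : V -> W) (g : U -> V) :
  linear_map f -> linear_map g -> linear_map (f \o g).
Proof. by move=> hf hg a x y /=; rewrite hg hf. Qed.

Lemma lin_id (k : fieldType) (U : lmodType k) : linear_map (@id U).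
Proof. by []. Qed.

Lemma GDNP_hom_comp (k : fieldType) (U V W : lmodType k)
  (d1 c1 : U -> U -> U) e1 (d2 c2 : V -> V -> V) e2 (d3 c3 : W -> W -> W) e3
  (f : V -> W) (g : U -> V) :
  is_GDNP_hom d2 c2 e2 d3 c3 e3 f -> is_GDNP_hom d1 c1 e1 d2 c2 e2 g ->
  is_GDNP_hom d1 c1 e1 d3 c3 e3 (f \o g).
Proof.
case=> lf f1 fd fc [lg g1 gd gc]; split => /=.
- exact: lin_comp.
- by rewrite g1 f1.
- by move=> x y; rewrite gd fd.
- by move=> x y; rewrite gc fc.
Qed.

Lemma CDA_hom_comp (k : fieldType) (U V W : lmodType k)
  (d1 : U -> U -> U) e1 D1 (d2 : V -> V -> V) e2 D2 (d3 : W -> W -> W) e3 D3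
  (f : V -> W) (g : U -> V) :
  is_CDA_hom d2 e2 D2 d3 e3 D3 f -> is_CDA_hom d1 e1 D1 d2 e2 D2 g ->
  is_CDA_hom d1 e1 D1 d3 e3 D3 (f \o g).
Proof.
case=> lf f1 fd fc [lg g1 gd gc]; split => /=.
- exact: lin_comp.
- by rewrite g1 f1.
- by move=> x y; rewrite gd fd.
- by move=> x; rewrite gc fc.
Qed.

Lemma GDNP_id (k : fieldType) (U : lmodType k) (d c : U -> U -> U) e :
  is_GDNP_hom d c e d c e id.
Proof. by split. Qed.
Lemma CDA_id (k : fieldType) (U : lmodType k) (d : U -> U -> U) e D :
  is_CDA_hom d e D d e D id.
Proof. by split. Qed.

Lemma iso_part (k : fieldType) (X : Type)
  (A : lmodType k) (dotA circA : A -> A -> A) (eA : A) (iA : X -> A)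
  (HA : is_free_DGDNP dotA circA eA iA)
  (B : lmodType k) (dotB : B -> B -> B) (eB : B) (DB : B -> B) (iB : X -> B)
  (HB : is_free_CDA dotB eB DB iB) :
  exists phi : A -> B,
         [/\ bijective phi,
             is_GDNP_hom dotA circA eA dotB (fun f g => dotB f (DB g)) eB phi,
             is_CDA_hom dotA eA (circA eA) dotB eB DB phi &
             forall a, phi (iA a) = iB a].
Proof.
have HBg := CDA_DGDNP HB.1.
have HAc := DGDNP_CDA HA.1.
have [phi [[phom phiX] _]] := HA.2 _ _ _ _ iB HBg.
have [psi [[pshom psiX] _]] := HB.2 _ _ _ _ iA HAc.
have phiC : is_CDA_hom dotA eA (circA eA) dotB eB DB phi.
  case: phom => l p1 pd pc; split => // x.
  by rewrite pc p1 (HB.1.2.2.2.1 _).1.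
have psiG : is_GDNP_hom dotB (fun f g => dotB f (DB g)) eB dotA circA eA psi.
  case: pshom => l p1 pd pc; split => // x y.
  by rewrite pd pc -DGDNP_circ //; exact: HA.1.
exists phi; split => //.
have [u [_ uu]] := HA.2 _ _ _ _ iA HA.1.
have [v [_ vv]] := HB.2 _ _ _ _ iB HB.1.
exists psi.
  move=> x.
  have h1 := uu (psi \o phi) (GDNP_hom_comp psiG phom) _ x.
  have h2 := uu id (GDNP_id _ _ _) (fun a => erefl) x.
  by rewrite /= in h1 h2; rewrite h1 -?h2 // => a /=; rewrite phiX psiX.
move=> x.
have h1 := vv (phi \o psi) (CDA_hom_comp phiC pshom) _ x.
have h2 := vv id (CDA_id _ _ _) (fun a => erefl) x.
by rewrite /= in h1 h2; rewrite h1 -?h2 // => a /=; rewrite psiX phiX.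
Qed.

Section Lex.
Variables (d : Order.disp_t) (X : orderType d).
Implicit Types p q r : nat * X.

Lemma lexge_total : total (@lexge d X).
Proof.
move=> [i a] [j b]; rewrite /lexge /=.
case: (ltngtP i j) => //= _; exact: le_total.
Qed.

Lemma lexge_trans : transitive (@lexge d X).
Proof.
move=> [j b] [i a] [l c]; rewrite /lexge /=.
move=> /orP[h1|/andP[/eqP e1 h1]] /orP[h2|/andP[/eqP e2 h2]]; apply/orP.
- by left; apply: ltn_trans h1.
- by left; rewrite -e2.
- by left; rewrite e1.
- by right; rewrite e1 e2 eqxx (le_trans h2 h1).
Qed.

Lemma lexge_anti : antisymmetric (@lexge d X).
Proof.
move=> [i a] [j b]; rewrite /lexge /=.
move=> /andP[/orP[h1|/andP[/eqP e1 h1]] /orP[h2|/andP[/eqP e2 h2]]].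
- by move: (ltn_trans h1 h2); rewrite ltnn.
- by move: h1; rewrite e2 ltnn.
- by move: h2; rewrite e1 ltnn.
- by rewrite e1 (@le_anti _ _ a b); rewrite ?h1 ?h2.
Qed.
End Lex.

Section Span.
Variables (d : Order.disp_t) (X : orderType d).
Variables (k : fieldType) (A : lmodType k) (dot circ : A -> A -> A) (e : A)
  (i : X -> A).
Hypothesis H : is_DGDNP dot circ e.

Local Notation eb := (ebracket circ e i).
Local Notation w := (normal_word dot circ e i).
Definition nw (s : seq (nat * X)) : A := foldr (fun p acc => dot (eb p) acc) e s.

Let bd : bilinear_op dot := H.1.1.
Let bc : bilinear_op circ := H.1.2.1.
Let cm : forall x y, dot x y = dot y x := H.1.2.2.1.
Let mA : forall x y z, dot x (dot y z) = dot (dot x y) z := H.1.2.2.2.1.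
Let un : forall x, dot e x = x /\ dot x e = x := H.1.2.2.2.2.1.

Lemma w_nw s : w s = nw s.
Proof.
elim: s => //= p [|q s] IH; first by rewrite (un _).2.
by rewrite IH.
Qed.

Lemma nw_cat s t : nw (s ++ t) = dot (nw s) (nw t).
Proof.
elim: s => /= [|p s IH]; first by rewrite (un _).1.
by rewrite IH mA.
Qed.

Lemma nw_perm s t : perm_eq s t -> nw s = nw t.
Proof.
elim: s t => [|p s IH] t; first by rewrite perm_sym => /perm_nilP ->.
move=> pst; have pt : p \in t by rewrite -(perm_mem pst) mem_head.
move: pst; case/splitPr: pt => t1 t2 pst.
have pst' : perm_eq s (t1 ++ t2).
  rewrite -(perm_cons p); apply: perm_trans pst _.
  by rewrite -[p :: t2]cat1s perm_catCA.
rewrite /= (IH _ pst') !nw_cat /= mA (cm (eb p)) -mA.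
by [].
Qed.

Definition spanL (v : A) : Prop :=
  exists L : seq (k * seq (nat * X)),
    all (fun p => normal_index p.2) L /\ v = \sum_(p <- L) p.1 *: w p.2.

Lemma spanL0 : spanL 0.
Proof. by exists [::]; rewrite big_nil. Qed.

Lemma spanLD x y : spanL x -> spanL y -> spanL (x + y).
Proof.
move=> [L1 [h1 ->]] [L2 [h2 ->]]; exists (L1 ++ L2).
by rewrite all_cat h1 h2 big_cat.
Qed.

Lemma spanLZ a x : spanL x -> spanL (a *: x).
Proof.
move=> [L [h ->]]; exists (map (fun p => (a * p.1, p.2)) L); split.
  by rewrite all_map.
rewrite big_map scaler_sumr; apply: eq_bigr => p _ /=; by rewrite scalerA.
Qed.

Lemma spanLw s : normal_index s -> spanL (w s).
Proof. by move=> h; exists [:: (1, s)]; rewrite /= h big_seq1 scale1r. Qed.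

Lemma spanL_sum (T : Type) (L : seq T) (F : T -> A) :
  (forall t, spanL (F t)) -> spanL (\sum_(t <- L) F t).
Proof.
move=> hF; elim: L => [|t L IH]; first by rewrite big_nil; exact: spanL0.
by rewrite big_cons; apply: spanLD.
Qed.

Lemma spanL_sum_in (T : eqType) (L : seq T) (F : T -> A) :
  (forall t, t \in L -> spanL (F t)) -> spanL (\sum_(t <- L) F t).
Proof.
elim: L => [|t L IH] hF; first by rewrite big_nil; exact: spanL0.
rewrite big_cons; apply: spanLD; first by apply: hF; rewrite mem_head.
by apply: IH => u hu; apply: hF; rewrite in_cons hu orbT.
Qed.

Lemma spanL_ww s t : normal_index s -> normal_index t -> spanL (dot (w s) (w t)).
Proof.
move=> _ _; rewrite !w_nw -nw_cat.
have hp : perm_eq (s ++ t) (sort (@lexge d X) (s ++ t)) by rewrite perm_sym perm_sort.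
rewrite (nw_perm hp).
rewrite -w_nw; apply: spanLw; exact: sort_sorted (@lexge_total d X) _.
Qed.

Lemma spanL_dot x y : spanL x -> spanL y -> spanL (dot x y).
Proof.
move=> [L1 [h1 ->]] [L2 [h2 ->]].
rewrite (big_morph (fun u => dot u _) (fun x y => bDl bd x y _) (b0l bd _)).
apply: spanL_sum_in => p pL; rewrite bZl //; apply: spanLZ.
rewrite (big_morph (fun u => dot _ u) (fun x y => bDr bd _ x y) (b0r bd _)).
apply: spanL_sum_in => q qL; rewrite bZr //; apply: spanLZ.
by apply: spanL_ww; [move/allP: h1; apply | move/allP: h2; apply].
Qed.

Lemma ebS p : circ e (eb p) = eb (p.1.+1, p.2).
Proof. by []. Qed.

Lemma spanL_de_nw s : normal_index s -> spanL (circ e (nw s)).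
Proof.
have [_ [_ [_ [_ [lD [Dm De]]]]]] := DGDNP_CDA H.
elim: s => [|p s IH] /=; first by rewrite De => _; exact: spanL0.
move=> ns; have ns' : normal_index s by move: ns; rewrite /normal_index /=; exact: path_sorted.
rewrite Dm; apply: spanLD; apply: spanL_dot.
- by rewrite ebS; apply: (spanLw (s := [:: (p.1.+1, p.2)])).
- by rewrite -w_nw; apply: spanLw.
- by apply: (spanLw (s := [:: p])).
- exact: IH.
Qed.

Lemma spanL_circ x y : spanL x -> spanL y -> spanL (circ x y).
Proof.
move=> hx [L [h ->]]; rewrite (DGDNP_circ H); apply: spanL_dot => //.
rewrite (big_morph (fun u => circ e u) (fun x y => bDr bc e x y) (b0r bc e)).
apply: spanL_sum_in => p pL; rewrite bZr //; apply: spanLZ.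
rewrite w_nw; apply: spanL_de_nw; by move/allP: h; apply.
Qed.

Lemma spanLe : spanL e.
Proof. exact: (spanLw (s := [::])). Qed.

Lemma spanLi a : spanL (i a).
Proof. exact: (spanLw (s := [:: (0%N, a)])). Qed.

End Span.

Section SubAlg.
Variables (k : fieldType) (V : lmodType k) (dot circ : V -> V -> V) (e : V)
  (P : {pred V}).
Hypothesis Pc : submod_closed P.
Hypothesis Pd : forall x y, x \in P -> y \in P -> dot x y \in P.
Hypothesis Pci : forall x y, x \in P -> y \in P -> circ x y \in P.
Hypothesis Pe : e \in P.

HB.instance Definition _ := GRing.isSubmodClosed.Build k V P Pc.
Record sub := SubV { vsub :> V; vsubP : vsub \in P }.
HB.instance Definition _ := [isSub for vsub].
HB.instance Definition _ := [Choice of sub by <:].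
HB.instance Definition _ := [SubChoice_isSubLmodule of sub by <:].

Lemma vsubD (x y : sub) : vsub (x + y) = vsub x + vsub y. Proof. by []. Qed.
Lemma vsubZ (a : k) (x : sub) : vsub (a *: x) = a *: vsub x. Proof. by []. Qed.
Lemma vsubN (x : sub) : vsub (- x) = - vsub x. Proof. by []. Qed.
Lemma vsubB (x y : sub) : vsub (x - y) = vsub x - vsub y. Proof. by []. Qed.

Definition dotS (x y : sub) : sub := SubV (Pd (vsubP x) (vsubP y)).
Definition circS (x y : sub) : sub := SubV (Pci (vsubP x) (vsubP y)).
Definition eS : sub := SubV Pe.

Lemma vsub_inj : injective vsub.
Proof. exact: val_inj. Qed.

Lemma sub_DGDNP : is_DGDNP dot circ e -> is_DGDNP dotS circS eS.
Proof.
move=> [[[bd1 bd2] [[bc1 bc2] [cm [mA [un [ls [rc [pm lp]]]]]]]] df].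
split; [split; [split|split; [split|split]]|].
- by move=> a x y z; apply: vsub_inj; exact: bd1.
- by move=> a x y z; apply: vsub_inj; exact: bd2.
- by move=> a x y z; apply: vsub_inj; exact: bc1.
- by move=> a x y z; apply: vsub_inj; exact: bc2.
- by move=> x y; apply: vsub_inj; exact: cm.
- split; first by move=> x y z; apply: vsub_inj; exact: mA.
  split; first by move=> x; split; apply: vsub_inj; [exact: (un _).1 | exact: (un _).2].
  split; first by move=> x y z; apply: vsub_inj; exact: ls.
  split; first by move=> x y z; apply: vsub_inj; exact: rc.
  split; first by move=> x y z; apply: vsub_inj; exact: pm.
  by move=> x y z; apply: vsub_inj; exact: lp.
- by move=> x y z; apply: vsub_inj; exact: df.
Qed.

Lemma sub_all (X : Type) (i : X -> V) (HA : is_free_DGDNP dot circ e i)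
  (Pi : forall a, i a \in P) : forall v, v \in P.
Proof.
have [phi [[phom phiX] _]] := HA.2 _ _ _ _ (fun a => SubV (Pi a)) (sub_DGDNP HA.1).
have [u [_ uu]] := HA.2 _ _ _ _ i HA.1.
have vhom : is_GDNP_hom dotS circS eS dot circ e vsub.
  by split => // a x y; rewrite vsubD vsubZ.
move=> v.
have h1 := uu (vsub \o phi) (GDNP_hom_comp vhom phom) _ v.
have h2 := uu id (GDNP_id _ _ _) (fun a => erefl) v.
rewrite /= in h1 h2; rewrite h2 -h1 ?vsubP // => a /=.
by rewrite phiX.
Qed.
End SubAlg.

Lemma pairs_to_basis (k : fieldType) (I : eqType) (V : lmodType k) (P : pred I)
  (w : I -> V) (L : seq (k * I)) : all (fun p => P p.2) L ->
  exists (S : seq I) (c : I -> k), [/\ uniq S, all P S &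
    \sum_(p <- L) p.1 *: w p.2 = \sum_(s <- S) c s *: w s].
Proof.
elim: L => [|[a s] L IH] /=.
  by move=> _; exists [::], (fun _ => 0); rewrite !big_nil.
move=> /andP[Ps /IH [S [c [uS aS eq]]]]; rewrite big_cons /= eq.
case sS: (s \in S).
  exists S, (fun t => c t + (if t == s then a else 0)); split => //.
  rewrite [in RHS](eq_bigr (fun t => c t *: w t + (if t == s then a else 0) *: w t));
    last by move=> t _; rewrite scalerDl.
  rewrite big_split /= addrC; congr (_ + _).
  rewrite (bigD1_seq s) //= eqxx big1 ?addr0 // => t /negbTE ->.
  by rewrite scale0r.
exists (s :: S), (fun t => if t == s then a else c t); split.
- by rewrite /= sS.
- by rewrite /= Ps.
- rewrite big_cons eqxx; congr (_ + _); apply: eq_big_seq => t tS.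
  by case: eqP tS => // ->; rewrite sS.
Qed.

Definition pb (T : Type) (Q : T -> Prop) (v : T) : bool :=
  if excluded_middle_informative (Q v) then true else false.

Lemma pbP (T : Type) (Q : T -> Prop) v : pb Q v <-> Q v.
Proof. by rewrite /pb; case: excluded_middle_informative. Qed.

Lemma spanning (d : Order.disp_t) (X : orderType d) (k : fieldType)
  (A : lmodType k) (dotA circA : A -> A -> A) (eA : A) (iA : X -> A)
  (HA : is_free_DGDNP dotA circA eA iA) (v : A) :
  exists (S : seq (seq (nat * X))) (c : seq (nat * X) -> k),
      all (normal_index (X:=X)) S /\
      v = \sum_(s <- S) c s *: normal_word dotA circA eA iA s.
Proof.
have H := HA.1.
pose P : {pred A} := pb (spanL dotA circA eA iA).
have Pc : submod_closed P.
  split; first by apply/pbP; exact: spanL0.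
  move=> a x y /pbP hx /pbP hy; apply/pbP; apply: spanLD => //; exact: spanLZ.
have Pd : forall x y, x \in P -> y \in P -> dotA x y \in P.
  by move=> x y /pbP hx /pbP hy; apply/pbP; apply: spanL_dot.
have Pci : forall x y, x \in P -> y \in P -> circA x y \in P.
  by move=> x y /pbP hx /pbP hy; apply/pbP; apply: spanL_circ.
have Pe : eA \in P by apply/pbP; exact: spanLe.
have Pi : forall a, iA a \in P by move=> a; apply/pbP; exact: spanLi.
have := sub_all Pc Pd Pci Pe HA Pi v.
move/pbP => [L [hL ->]].
have [S [c [_ aS ->]]] := pairs_to_basis (normal_word dotA circA eA iA) hL.
by exists S, c.
Qed.

Section Deriv.
Variables (k : fieldType) (n M : nat).
Local Notation W := {mpoly k[n.+1]}.

Definition sh (j : 'I_n.+1) : W := if (j + M <= n)%N then 'X_(inord (j + M)) else 0.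
Definition DW (q : W) : W := \sum_(j < n.+1) q^`M(j) * sh j.

Lemma DW_CDA : is_CDA (fun p q : W => p * q) 1 DW.
Proof.
have lD : linear_map DW.
  move=> a x y; rewrite /DW scaler_sumr -big_split /=; apply: eq_bigr => j _.
  by rewrite mderivD mderivZ mulrDl scalerAl.
split; [split|].
  by move=> a x y z; rewrite mulrDl scalerAl.
  by move=> a x y z; rewrite mulrDr scalerAr.
split; first by move=> x y; rewrite mulrC.
split; first by move=> x y z; rewrite mulrA.
split; first by move=> x; rewrite mul1r mulr1.
split; first by [].
split.
  move=> x y; rewrite /DW mulr_suml mulr_sumr -big_split /=; apply: eq_bigr => j _.
  by rewrite mderivM mulrDl mulrAC mulrA.
rewrite /DW big1 // => j _; by rewrite -mpolyC1 mderivC mul0r.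
Qed.

Lemma DWX (u : 'I_n.+1) : DW 'X_u = sh u.
Proof.
rewrite /DW (bigD1 u) //= big1 ?addr0.
  rewrite mderivX mnm1E eqxx scale1r.
  have -> : (U_(u) - U_(u))%MM = 0%MM by apply/mnmP => i; rewrite mnmBE subnn mnm0E.
  by rewrite mpolyX0 mul1r.
move=> j /negbTE nj; rewrite mderivX mnm1E.
by rewrite (eq_sym u) nj scale0r mul0r.
Qed.
End Deriv.

Section Indep.
Variables (d : Order.disp_t) (X : orderType d) (k : fieldType)
  (A : lmodType k) (dotA circA : A -> A -> A) (eA : A) (iA : X -> A).
Hypothesis H : is_DGDNP dotA circA eA.
Variables (L : seq X) (N : nat).
Let M := size L.
Let n := (N.+1 * M)%N.
Local Notation W := {mpoly k[n.+1]}.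

Definition idx (p : nat * X) : nat := (p.1 * M + index p.2 L)%N.
Definition vi (p : nat * X) : 'I_n.+1 := inord (idx p).
Definition gen (a : X) : W := 'X_(inord (index a L)).
Definition dom (p : nat * X) : bool := (p.1 <= N)%N && (p.2 \in L).

Lemma idx_le p : dom p -> (idx p <= n)%N.
Proof.
case/andP => h1 h2; have := index_mem p.2 L; rewrite h2 -/M /idx /n => h3.
nia.
Qed.

Lemma idx_inj p q : dom p -> dom q -> idx p = idx q -> p = q.
Proof.
move=> hp hq; have := hp; have := hq; case/andP => _ q2; case/andP => _ p2.
have ip := index_mem p.2 L; have iq := index_mem q.2 L.
rewrite p2 in ip; rewrite q2 in iq.
have M0 : (0 < M)%N by rewrite /M; case: (L) ip.
rewrite /idx => e.
have e1 : p.1 = q.1.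
  have := congr1 (divn^~ M) e; rewrite !divnMDl // !divn_small // !addn0 //.
have e2 : index p.2 L = index q.2 L.
  have := congr1 (modn^~ M) e; rewrite !modnMDl !modn_small //.
have : p.2 = q.2.
  by rewrite -(nth_index p.2 p2) -(nth_index p.2 q2) e2.
by case: p q e1 {hp hq p2 q2 ip iq e e2} => [? ?] [? ?] /= -> ->.
Qed.

Lemma vi_inj p q : dom p -> dom q -> vi p = vi q -> p = q.
Proof.
move=> hp hq /(congr1 (@nat_of_ord _)); rewrite /vi !inordK ?ltnS ?idx_le //.
exact: idx_inj.
Qed.

Fixpoint mon (s : seq (nat * X)) : 'X_{1..n.+1} :=
  if s is p :: s' then (U_(vi p) + mon s')%MM else 0%MM.

Lemma monE s (v : 'I_n.+1) : mon s v = count (fun p => vi p == v) s.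
Proof.
elim: s => [|p s IH] /=; first by rewrite mnm0E.
by rewrite mnmDE mnm1E IH.
Qed.

Lemma mon_inj s t : normal_index s -> normal_index t -> all dom s -> all dom t ->
  mon s = mon t -> s = t.
Proof.
move=> ns nt ds dt e.
apply: (sorted_eq (@lexge_trans d X) (@lexge_anti d X)) => //.
apply/allP => p hp /=.
have dp : dom p by move: hp; rewrite mem_cat => /orP[] h; [move/allP: ds|move/allP: dt]; apply.
have hc : forall u, all dom u -> count_mem p u = count (fun q => vi q == vi p) u.
  move=> u du; apply: eq_in_count => q qu /=.
  apply/eqP/eqP => [->//|]; apply: vi_inj => //; by move/allP: du; apply.
by rewrite (hc _ ds) (hc _ dt) -!monE e.
Qed.

Variable phi : A -> W.
Hypothesis phom : is_GDNP_hom dotA circA eA (fun p q : W => p * q)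
  (fun f g => f * DW M g) 1 phi.
Hypothesis phiX : forall a, phi (iA a) = gen a.

Lemma phi_eb p : dom p -> phi (ebracket circA eA iA p) = 'X_(vi p).
Proof.
case: p => j a /andP[/= hj ha]; rewrite /ebracket /=.
elim: j hj => [|j IH] hj /=.
  by rewrite phiX /gen /vi /idx /= mul0n add0n.
case: phom => _ p1 _ pc.
rewrite pc p1 mul1r IH ?(ltnW hj) // DWX /sh.
have := index_mem a L; rewrite ha -/M => ia.
rewrite /vi /idx /= inordK; last by rewrite ltnS; apply: (idx_le (p := (j, a))); rewrite /dom /= ha (ltnW hj).
have -> : (j * M + index a L + M <= n)%N by rewrite /n; nia.
by congr ('X_ (inord _)); rewrite mulSn; lia.
Qed.

Lemma phi_w s : all dom s -> phi (normal_word dotA circA eA iA s) = 'X_[mon s].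
Proof.
rewrite w_nw //; elim: s => [|p s IH] /=.
  by move=> _; case: phom => _ -> _ _; rewrite mpolyX0.
case/andP => dp ds; case: phom => _ _ pd _.
by rewrite pd IH // phi_eb // mpolyXD.
Qed.

End Indep.

Lemma lin0 (k : fieldType) (U V : lmodType k) (f : U -> V) : linear_map f -> f 0 = 0.
Proof. move=> hf; apply: self0; have := hf 1 (0:U) 0; rewrite !scale1r addr0; exact. Qed.

Lemma independence (d : Order.disp_t) (X : orderType d) (k : fieldType)
  (A : lmodType k) (dotA circA : A -> A -> A) (eA : A) (iA : X -> A)
  (HA : is_free_DGDNP dotA circA eA iA)
  (S : seq (seq (nat * X))) (c : seq (nat * X) -> k) :
  uniq S -> all (normal_index (X:=X)) S ->
  \sum_(s <- S) c s *: normal_word dotA circA eA iA s = 0 ->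
  forall s, s \in S -> c s = 0.
Proof.
move=> uS nS hsum s0 s0S.
pose L := map snd (flatten S).
pose N := (\max_(p <- flatten S) p.1)%N.
have domS : forall s, s \in S -> all (dom L N) s.
  move=> s sS; apply/allP => p ps.
  have pf : p \in flatten S by apply/flattenP; exists s.
  apply/andP; split; last exact: (map_f snd pf).
  exact: (@leq_bigmax_seq _ (flatten S) xpredT (fun p : nat * X => p.1) p pf).
pose n := (N.+1 * size L)%N.
have HW := CDA_DGDNP (DW_CDA k n (size L)).
have [phi [[phom phiX] _]] := HA.2 _ _ _ _ (@gen d X k L N) HW.
have := congr1 phi hsum.
case: (phom) => lphi _ _ _.
have phiD : {morph phi : x y / x + y} by move=> x y; have := lphi 1 x y; rewrite !scale1r.
rewrite (lin0 lphi) (big_morph phi phiD (lin0 lphi)).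
under eq_big_seq => s sS.
  have -> : phi (c s *: normal_word dotA circA eA iA s) = c s *: 'X_[mon L N s].
    by have := lphi (c s) (normal_word dotA circA eA iA s) 0; rewrite !addr0 (lin0 lphi) addr0 => ->; rewrite (phi_w HA.1 phom phiX (domS s sS)).
  over.
move/(congr1 (mcoeff (mon L N s0))); rewrite raddf_sum mcoeff0 /=.
rewrite (bigD1_seq s0) //= mcoeffZ mcoeffX eqxx mulr1 big1_seq ?addr0 //.
move=> s /andP[ns sS]; rewrite mcoeffZ mcoeffX.
case: eqP => [e|]; last by rewrite mulr0.
case/negP: ns; apply/eqP; apply: (mon_inj (L:=L) (N:=N)) => //.
- by move/allP: nS; apply.
- by move/allP: nS; apply.
- exact: domS.
- exact: domS.
Qed.

Unset Implicit Arguments.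

Theorem mainTheorem6 (k : fieldType) (d : Order.disp_t) (X : orderType d)
  (wfX : well_founded (fun x y : X => (x < y)%O))
  (A : lmodType k) (dotA circA : A -> A -> A) (eA : A) (iA : X -> A)
  (HA : is_free_DGDNP dotA circA eA iA)
  (B : lmodType k) (dotB : B -> B -> B) (eB : B) (DB : B -> B) (iB : X -> B)
  (HB : is_free_CDA dotB eB DB iB) :
  [/\ is_basis_on (normal_index (X:=X)) (normal_word dotA circA eA iA),
      is_GDNP dotB (fun f g => dotB f (DB g)) eB,
      (exists phi : A -> B,
         [/\ bijective phi,
             is_GDNP_hom dotA circA eA dotB (fun f g => dotB f (DB g)) eB phi &
             forall a, phi (iA a) = iB a]) &
      (exists psi : A -> B,
         [/\ bijective psi,
             is_CDA_hom dotA eA (circA eA) dotB eB DB psi &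
             forall a, psi (iA a) = iB a])].
Proof.
have [phi [bij hG hC hX]] := iso_part HA HB.
split.
- split; first by move=> v; exact: spanning.
  move=> S c uS nS hs s sS; exact: (independence HA uS nS hs sS).
- exact: (CDA_DGDNP HB.1).1.
- by exists phi; split.
- by exists phi; split.
Qed.
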